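(* Let $S=(G,P,\Lambda,I)$ be a completely simple semigroup with non-singular sandwich matrix $P$, and let $\mathbf{1}=(1,1_G,1)$. Then the equation $x=y$ is equivalent over $S$ (has the same solution set in $S^2$) to a system of the form $\{t_i(x,y)=\mathbf{1}\mid i\in\mathcal{I}\}$, where each $t_i$ is an $\mathcal{L}_S$-term.
   Context: Rees representation: a completely simple semigroup $S=(G,P,\Lambda,I)$ is given by a group $G$, index sets $\Lambda,I$ (each containing an element $1$), and a matrix $P=(p_{i\lambda})_{i\in I,\lambda\in\Lambda}$ over $G$ normalised so that $p_{1\lambda}=p_{i1}=1_G$; elements are triples $(\lambda,g,i)$ with product $(\lambda,g,i)(\mu,h,j)=(\lambda,gp_{i\mu}h,j)$ and inversion $(\lambda,g,i)^{-1}=(\lambda,p_{i\lambda}^{-1}g^{-1}p_{i\lambda}^{-1},i)$. $P$ is non-singular if it has no two equal rows and no two equal columns. The language $\mathcal{L}_S$ is $\{\cdot,{}^{-1}\}$ plus a constant for each element of $S$; terms are built from variables and constants using products and ${}^{-1}$. Two systems are equivalent over $S$ if they have the same solution set. *)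

(* Defs.v *)
Set Implicit Arguments.

Record Group := {
  gcar :> Type;
  gmul : gcar -> gcar -> gcar;
  ginv : gcar -> gcar;
  gone : gcar;
  gmulA : forall a b c, gmul a (gmul b c) = gmul (gmul a b) c;
  gmul1l : forall a, gmul gone a = a;
  gmul1r : forall a, gmul a gone = a;
  gmulVl : forall a, gmul (ginv a) a = gone;
  gmulVr : forall a, gmul a (ginv a) = gone
}.

Definition rees_elt (G : Group) (Lam I : Type) : Type := (Lam * gcar G * I)%type.

Definition rees_mul (G : Group) (Lam I : Type) (P : I -> Lam -> G)
  (a b : rees_elt G Lam I) : rees_elt G Lam I :=
  match a, b with
  | (l, g, i), (m, h, j) => (l, gmul G g (gmul G (P i m) h), j)
  end.

Definition rees_inv (G : Group) (Lam I : Type) (P : I -> Lam -> G)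
  (a : rees_elt G Lam I) : rees_elt G Lam I :=
  match a with
  | (l, g, i) =>
      (l, gmul G (ginv G (P i l)) (gmul G (ginv G g) (ginv G (P i l))), i)
  end.

Inductive var2 := Vx | Vy.

(* Terms of the language L_S = {., ^-1} + constants from S, in variables x, y. *)
Inductive term (A : Type) :=
  | TVar : var2 -> term A
  | TConst : A -> term A
  | TMul : term A -> term A -> term A
  | TInv : term A -> term A.

Fixpoint eval_term (A : Type) (mul : A -> A -> A) (inv : A -> A)
  (x y : A) (t : term A) : A :=
  match t with
  | TVar _ Vx => x
  | TVar _ Vy => y
  | TConst a => a
  | TMul t1 t2 => mul (eval_term mul inv x y t1) (eval_term mul inv x y t2)
  | TInv t1 => inv (eval_term mul inv x y t1)
  end.

(* Main.v *)
Require Import Defs.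

Section Helpers.
Variable G : Group.

Lemma ginv1 : ginv G (gone G) = gone G.
Proof. rewrite <- (gmul1l G (ginv G (gone G))). apply gmulVr. Qed.

Lemma gdiv_eq (a b : G) : gmul G a (ginv G b) = gone G -> a = b.
Proof.
  intro H. rewrite <- (gmul1r G a), <- (gmulVl G b), gmulA, H. apply gmul1l.
Qed.

Lemma gcancel_l (a b c : G) : gmul G a b = gmul G a c -> b = c.
Proof.
  intro H. rewrite <- (gmul1l G b), <- (gmul1l G c), <- (gmulVl G a),
    <- !gmulA, H. reflexivity.
Qed.

Lemma gcancel_r (a b c : G) : gmul G b a = gmul G c a -> b = c.
Proof.
  intro H. rewrite <- (gmul1r G b), <- (gmul1r G c), <- (gmulVr G a),
    !gmulA, H. reflexivity.
Qed.

Variables (Lam I : Type) (l1 : Lam) (i1 : I) (P : I -> Lam -> G).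
Hypothesis Pnorm_row : forall l : Lam, P i1 l = gone G.
Hypothesis Pnorm_col : forall i : I, P i l1 = gone G.

Definition E : term (rees_elt G Lam I) := TConst (l1, gone G, i1).

Definition tL (m : Lam) : term (rees_elt G Lam I) :=
  let c := TConst (m, gone G, i1) in
  TMul (TMul (TMul (TMul E (TVar _ Vx)) c) E)
       (TInv (TMul (TMul (TMul E (TVar _ Vy)) c) E)).

Definition tI (k : I) : term (rees_elt G Lam I) :=
  let d := TConst (l1, gone G, k) in
  TMul (TMul (TMul (TMul E d) (TVar _ Vx)) E)
       (TInv (TMul (TMul (TMul E d) (TVar _ Vy)) E)).

Lemma eval_tL m l g i l' h j :
  eval_term (rees_mul P) (rees_inv P) (l, g, i) (l', h, j) (tL m)
  = (l1, gmul G (gmul G g (P i m)) (ginv G (gmul G h (P j m))), i1).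
Proof.
  simpl. rewrite ?Pnorm_row, ?Pnorm_col, ?ginv1, ?gmul1l, ?gmul1r.
  reflexivity.
Qed.

Lemma eval_tI k l g i l' h j :
  eval_term (rees_mul P) (rees_inv P) (l, g, i) (l', h, j) (tI k)
  = (l1, gmul G (gmul G (P k l) g) (ginv G (gmul G (P k l') h)), i1).
Proof.
  simpl. rewrite ?Pnorm_row, ?Pnorm_col, ?ginv1, ?gmul1l, ?gmul1r.
  reflexivity.
Qed.

End Helpers.

Theorem mainTheorem4 (G : Group) (Lam I : Type) (l1 : Lam) (i1 : I)
  (P : I -> Lam -> G)
  (Pnorm_row : forall l : Lam, P i1 l = gone G)
  (Pnorm_col : forall i : I, P i l1 = gone G)
  (Pnonsing_rows : forall i j : I, (forall l : Lam, P i l = P j l) -> i = j)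
  (Pnonsing_cols : forall l m : Lam, (forall i : I, P i l = P i m) -> l = m) :
  exists (J : Type) (t : J -> term (rees_elt G Lam I)),
    forall x y : rees_elt G Lam I,
      x = y <->
      (forall j : J,
         eval_term (rees_mul P) (rees_inv P) x y (t j) = (l1, gone G, i1)).
Proof.
  exists (Lam + I)%type.
  exists (fun s => match s with inl m => tL G Lam I l1 i1 m | inr k => tI G Lam I l1 i1 k end).
  intros [[l g] i] [[l' h] j]. split.
  - intros Heq. injection Heq as -> -> ->.
    intros [m|k].
    + rewrite eval_tL by assumption. rewrite gmulVr. reflexivity.
    + rewrite eval_tI by assumption. rewrite gmulVr. reflexivity.
  - intros H.
    assert (HL : forall m, gmul G g (P i m) = gmul G h (P j m)).
    { intro m. specialize (H (inl m)). cbv beta iota in H.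
      rewrite eval_tL in H by assumption. injection H as H. apply gdiv_eq. exact H. }
    assert (HI : forall k, gmul G (P k l) g = gmul G (P k l') h).
    { intro k. specialize (H (inr k)). cbv beta iota in H.
      rewrite eval_tI in H by assumption. injection H as H. apply gdiv_eq. exact H. }
    assert (Hgh : g = h).
    { specialize (HL l1). rewrite !Pnorm_col, !gmul1r in HL. exact HL. }
    subst h.
    assert (Hij : i = j).
    { apply Pnonsing_rows. intro m. eapply gcancel_l. apply HL. }
    assert (Hll : l = l').
    { apply Pnonsing_cols. intro k. eapply gcancel_r. apply HI. }
    subst. reflexivity.
Qed.
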